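(* Let $\mathbb{C}[X]^*$ be the linear dual of the polynomial algebra $\mathbb{C}[X]$, endowed with the convolution product $(f*g)(X^n)=\sum_{k=0}^n\binom{n}{k}f(X^k)g(X^{n-k})$ for $n\geq 0$ (unit $\varepsilon$ with $\varepsilon(X^n)=\delta_{n,0}$), and let $\mathbb{C}[X]^{\circ}\subseteq\mathbb{C}[X]^*$ be the subalgebra of linear forms vanishing on some non-zero ideal of $\mathbb{C}[X]$. Let $J=\{f\in\mathbb{C}[X]^{\circ}\mid f(1)=0\}$. Let $\xi\in\mathbb{C}[X]^*$ be defined by $\xi(X^n)=\delta_{n,1}$, for $\lambda\in\mathbb{C}$ let $\phi_\lambda:\mathbb{C}[X]\to\mathbb{C}$ be the algebra map with $\phi_\lambda(X)=\lambda$, let $G_a=\{\phi_\lambda\mid\lambda\in\mathbb{C}\}$ (a group under convolution, $\phi_\lambda*\phi_\mu=\phi_{\lambda+\mu}$, identity $\phi_0=\varepsilon$), let $\mathbb{C}G_a$ be its group algebra with counit $\varepsilon_a(\phi_\lambda)=1$, and let $\Psi:\mathbb{C}[\xi]\otimes\mathbb{C}G_a\to\mathbb{C}[X]^{\circ}$, $\xi^n\otimes\phi_\lambda\mapsto\xi^n*\phi_\lambda$, be the (Hopf) algebra isomorphism. Then $\Psi$ induces an isomorphism of vector spaces $$\mathbb{C}\bar{\xi}\oplus\frac{\ker(\varepsilon_a)}{\ker(\varepsilon_a)^2}\cong\frac{J}{J^2},$$ where $\bar\xi=\xi+\langle\xi^2\rangle\in\langle\xi\rangle/\langle\xi^2\rangle$;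 explicitly it sends $\bar\xi\mapsto \xi+J^2$ and $x+\ker(\varepsilon_a)^2\mapsto \Psi(1\otimes x)+J^2$.
   Context: $\mathbb{C}[X]$ is the Hopf algebra with $\Delta(X)=X\otimes 1+1\otimes X$, $\varepsilon(X)=0$, $S(X)=-X$. The map $\Psi$ is known to be an isomorphism of Hopf algebras; $\mathbb{C}[\xi]$ is a polynomial algebra in $\xi$ with counit $\varepsilon_\xi(\xi)=0$, and the augmentation of $\mathbb{C}[X]^\circ$ (evaluation at $1$) corresponds under $\Psi$ to $\varepsilon_\xi\otimes\varepsilon_a$. *)

(* Defs.v *)
From mathcomp Require Import all_boot all_algebra finmap.
From mathcomp Require Import complex.
From mathcomp Require Import Rstruct.
Set Implicit Arguments. Unset Strict Implicit. Unset Printing Implicit Defensive.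
Import GRing.Theory.
Local Open Scope ring_scope.

Definition C : numClosedFieldType := (Rdefinitions.R)[i].

(* A linear form f on C[X] is determined by its values f(X^n); we represent
   an element of the linear dual C[X]^* by  n |-> f(X^n). *)
Definition dual := nat -> C.

Definition eval_form (f : dual) (p : {poly C}) : C :=
  \sum_(i < size p) p`_i * f i.

Definition conv (f g : dual) : dual :=
  fun n => \sum_(k < n.+1) 'C(n, k)%:R * f k * g (n - k)%N.

Definition is_ideal (I : {poly C} -> Prop) : Prop :=
  I 0 /\ (forall p q, I p -> I q -> I (p + q)) /\ (forall p q, I p -> I (q * p)).

Definition in_circ (f : dual) : Prop :=
  exists I : {poly C} -> Prop, is_ideal I /\ (exists p, I p /\ p != 0) /\
    (forall q, I q -> eval_form f q = 0).

(* J = { f in C[X]° | f(1) = 0 }  (note 1 = X^0) *)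
Definition inJ (f : dual) : Prop := in_circ f /\ f 0%N = 0.

Definition inJ2 (h : dual) : Prop :=
  exists s : seq (dual * dual), List.Forall (fun uv => inJ uv.1 /\ inJ uv.2) s /\
    forall n, h n = \sum_(uv <- s) conv uv.1 uv.2 n.

Definition xi : dual := fun n => (n == 1%N)%:R.

Definition phi (l : C) : dual := fun n => l ^+ n.

(* The group algebra C G_a : finitely supported functions G_a ~ C -> C,
   a = sum_l a(l) phi_l. *)
Definition GA := {fsfun C -> C with 0}.

Definition eps_a (a : GA) : C := \sum_(l <- finsupp a) a l.

(* product in the group algebra: phi_l phi_m = phi_(l+m) *)
Definition gmul (a b : GA) : C -> C :=
  fun l => \sum_(m <- finsupp a) a m * b (l - m).

Definition in_ker_eps_a (a : GA) : Prop := eps_a a = 0.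

Definition in_ker_eps_a2 (x : GA) : Prop :=
  exists s : seq (GA * GA),
    List.Forall (fun uv => in_ker_eps_a uv.1 /\ in_ker_eps_a uv.2) s /\
    forall l, x l = \sum_(uv <- s) gmul uv.1 uv.2 l.

(* Psi(1 (x) a) = sum_l a(l) phi_l  in C[X]^* *)
Definition Psi1 (a : GA) : dual := fun n => \sum_(l <- finsupp a) a l * phi l n.

(* The map C xi_bar (+) ker(eps_a) -> J,  (c, x) |-> c xi + Psi(1 (x) x) *)
Definition Lmap (c : C) (x : GA) : dual := fun n => c * xi n + Psi1 x n.

(* Main.v *)
Require Import Defs.
From mathcomp Require Import all_boot all_algebra finmap.
From mathcomp Require Import ring lra.
Import GRing.Theory Num.Theory.
Local Open Scope ring_scope.

Definition xsh (f : dual) : dual := fun m => m%:R * f m.-1.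
Fixpoint b (n : nat) (mu : C) : dual :=
  match n with 0%N => phi mu | n'.+1 => xsh (b n' mu) end.
Definition Lop (l : C) (f : dual) : dual := fun m => f m.+1 - l * f m.

Ltac cC := match goal with |- @eq _ ?a ?b => change (@eq C a b) end.

Lemma b0 n mu : b n mu 0 = (n == 0%N)%:R.
Proof. by case: n => [|n] /=; rewrite /phi /xsh ?expr0 // mul0r. Qed.

Lemma b_shift n mu m : b n mu m.+1 = mu * b n mu m + n%:R * b n.-1 mu m.
Proof.
elim: n m => [|n IH] m /=.
  by rewrite /phi exprS mul0r addr0.
rewrite /xsh /=.
case: m => [|m] /=.
  rewrite mul0r mulr0 add0r b0; case: n {IH} => [|n] /=; last by rewrite !mulr0.
  by [].
have -> : m.+2%:R * b n mu m.+1 = m.+1%:R * b n mu m.+1 + b n mu m.+1.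
  by rewrite -[m.+2]addn1 natrD mulrDl mul1r.
rewrite {1}IH; case: n {IH} => [|n].
  rewrite [b 0 _ _]/= [b 0.-1 _ _]/= /phi exprS -!natr1; cC; ring.
rewrite [b n.+1 _ m.+1]/= /xsh /= -!natr1; cC; ring.
Qed.

Lemma Lop_b l n mu m : Lop l (b n mu) m = (mu - l) * b n mu m + n%:R * b n.-1 mu m.
Proof. by rewrite /Lop b_shift; ring. Qed.

Lemma conv_ext f f' g g' : f =1 f' -> g =1 g' -> conv f g =1 conv f' g'.
Proof. by move=> Hf Hg n; rewrite /conv; apply: eq_bigr => k _; rewrite Hf Hg. Qed.

Lemma conv_comm f g : conv f g =1 conv g f.
Proof.
move=> n; rewrite /conv (reindex_inj rev_ord_inj) /=; apply: eq_bigr => k _.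
have kn : (k <= n)%N by rewrite -ltnS.
rewrite subSS bin_sub ?subKn //; cC; ring.
Qed.

Lemma conv_xi g m : conv xi g m = xsh g m.
Proof.
rewrite /conv /xsh /xi; case: m => [|m].
  by rewrite big_ord1 /= !mul0r mulr0 mul0r.
rewrite big_ord_recl big_ord_recl big1 => [|k _]; last by rewrite /= mulr0 mul0r.
rewrite /= !mulr0 !mul0r add0r addr0 bin1 mulr1 subSS subn0; by [].
Qed.

Lemma conv_xsh f g m : conv (xsh f) g m = xsh (conv f g) m.
Proof.
rewrite /conv /xsh; case: m => [|m].
  by rewrite big_ord1 /= !mul0r mulr0 mul0r.
rewrite big_ord_recl /= mul0r mulr0 mul0r add0r mulr_sumr.
apply: eq_bigr => j _ /=.
have H := congr1 (fun x => x%:R : C) (mul_bin_diag m.+1 j).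
rewrite /= !natrM in H.
rewrite subSS.
have -> : 'C(m.+1, bump 0 j)%:R * ((bump 0 j)%:R * f j) = ('C(m.+1, j.+1)%:R * (j.+1)%:R * f j :> C).
  by rewrite /bump /= add1n mulrA.
rewrite (mulrC ('C(m.+1, j.+1)%:R)) -H; cC; ring.
Qed.

Lemma xsh_ext f g : f =1 g -> xsh f =1 xsh g.
Proof. by move=> H m; rewrite /xsh H. Qed.

Lemma conv_xsh_r f g m : conv f (xsh g) m = xsh (conv f g) m.
Proof.
rewrite conv_comm conv_xsh; apply: xsh_ext => k; exact: conv_comm.
Qed.

Lemma conv_phi mu nu m : conv (phi mu) (phi nu) m = phi (mu + nu) m.
Proof.
rewrite /conv /phi (addrC mu) exprDn; apply: eq_bigr => k _.
rewrite -mulr_natl; cC; ring.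
Qed.

Lemma conv_b n k mu nu m : conv (b n mu) (b k nu) m = b (n + k) (mu + nu) m.
Proof.
elim: n m => [|n IH] m.
  rewrite add0n; elim: k m => [|k IHk] m; first exact: conv_phi.
  rewrite [b k.+1 _]/= conv_xsh_r [b k.+1 _]/=; apply: xsh_ext => j; exact: IHk.
rewrite [b n.+1 _]/= conv_xsh addSn [b (n + k).+1 _]/=; apply: xsh_ext => j; exact: IH.
Qed.

Definition term := (nat * C * C)%type.
Definition val (r : seq term) : dual := fun m => \sum_(t <- r) t.2 * b t.1.1 t.1.2 m.

Lemma conv_suml (I : Type) (r : seq I) (c : I -> C) (F : I -> dual) g m :
  conv (fun k => \sum_(i <- r) c i * F i k) g m = \sum_(i <- r) c i * conv (F i) g m.
Proof.
rewrite /conv.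
under eq_bigr do rewrite mulr_sumr mulr_suml.
rewrite exchange_big; apply: eq_bigr => i _; rewrite mulr_sumr; apply: eq_bigr => k _; cC; ring.
Qed.

Lemma conv_sumr (I : Type) (r : seq I) (c : I -> C) (F : I -> dual) g m :
  conv g (fun k => \sum_(i <- r) c i * F i k) m = \sum_(i <- r) c i * conv g (F i) m.
Proof.
rewrite conv_comm conv_suml; apply: eq_bigr => i _; by rewrite conv_comm.
Qed.

Definition prodr (r1 r2 : seq term) : seq term :=
  [seq ((t1.1.1 + t2.1.1)%N, t1.1.2 + t2.1.2, t1.2 * t2.2) | t1 <- r1, t2 <- r2].

Lemma val_conv r1 r2 m : conv (val r1) (val r2) m = val (prodr r1 r2) m.
Proof.
rewrite /val (@conv_suml _ r1 (fun t => t.2) (fun t => b t.1.1 t.1.2)) big_allpairs_dep.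
apply: eq_bigr => t1 _.
rewrite (@conv_sumr _ r2 (fun t => t.2) (fun t => b t.1.1 t.1.2)) mulr_sumr.
apply: eq_bigr => t2 _; rewrite conv_b /=; cC; ring.
Qed.

Definition Span (f : dual) := exists r, f =1 val r.

Lemma Span_ext f g : f =1 g -> Span f -> Span g.
Proof. by move=> H [r Hr]; exists r => m; rewrite -H. Qed.

Lemma Span_0 : Span (fun _ => 0).
Proof. by exists [::] => m; rewrite /val big_nil. Qed.

Lemma Span_add f g : Span f -> Span g -> Span (fun m => f m + g m).
Proof.
move=> [r1 H1] [r2 H2]; exists (r1 ++ r2) => m; by rewrite /val big_cat /= H1 H2.
Qed.

Lemma Span_scale c f : Span f -> Span (fun m => c * f m).
Proof.
move=> [r H]; exists [seq (t.1, c * t.2) | t <- r] => m.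
rewrite /val big_map H /val mulr_sumr; apply: eq_bigr => t _ /=; by rewrite mulrA.
Qed.

Lemma Span_b n mu : Span (b n mu).
Proof. by exists [:: (n, mu, 1)] => m; rewrite /val big_seq1 /= mul1r. Qed.

Lemma Lop_ext l f g : f =1 g -> Lop l f =1 Lop l g.
Proof. by move=> H m; rewrite /Lop !H. Qed.

Fixpoint Lops (s : seq C) (f : dual) : dual :=
  match s with [::] => f | l :: s' => Lops s' (Lop l f) end.

Lemma Lops_ext s f g : f =1 g -> Lops s f =1 Lops s g.
Proof.
elim: s f g => [|l s IH] f g H //=; apply: IH; exact: Lop_ext.
Qed.

Lemma Lops_lin s c1 c2 f g :
  Lops s (fun m => c1 * f m + c2 * g m) =1 (fun m => c1 * Lops s f m + c2 * Lops s g m).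
Proof.
elim: s f g => [|l s IH] f g m //=.
rewrite (@Lops_ext s _ (fun m => c1 * Lop l f m + c2 * Lop l g m)) ?IH //.
by move=> k; rewrite /Lop; cC; ring.
Qed.

Lemma Lops_0 s : Lops s (fun _ => 0) =1 (fun _ => 0).
Proof.
elim: s => [|l s IH] m //=.
rewrite (@Lops_ext s _ (fun _ => 0)) ?IH // => k; by rewrite /Lop mulr0 subr0.
Qed.

Lemma Lops_val s r : Lops s (val r) =1 (fun m => \sum_(t <- r) t.2 * Lops s (b t.1.1 t.1.2) m).
Proof.
elim: r => [|t r IH] m.
  by rewrite big_nil (@Lops_ext s _ (fun _ => 0)) ?Lops_0 // => k; rewrite /val big_nil.
rewrite big_cons (@Lops_ext s _ (fun m => t.2 * b t.1.1 t.1.2 m + 1 * val r m)).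
  by rewrite Lops_lin IH mul1r.
by move=> k; rewrite /val big_cons mul1r.
Qed.

Lemma Lops_kill s n mu : (n < count_mem mu s)%N -> Lops s (b n mu) =1 (fun _ => 0).
Proof.
elim: s n => [|l s IH] n //= Hn m.
rewrite (@Lops_ext s _ (fun m => (mu - l) * b n mu m + n%:R * b n.-1 mu m)); last first.
  by move=> k; rewrite Lop_b.
rewrite Lops_lin.
case: (eqVneq l mu) Hn => [->|neq] /= Hn.
  rewrite subrr mul0r add0r; case: n Hn => [|n] Hn; first by rewrite mul0r.
  by rewrite IH ?mulr0.
rewrite add0n in Hn; rewrite IH // mulr0 add0r.
case: n Hn => [|n] Hn; first by rewrite mul0r.
by rewrite IH ?mulr0 // (leq_trans _ Hn).
Qed.

Lemma sum_last (F : nat -> C) N : \sum_(i < N.+1) F i = \sum_(i < N) F i + F N.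
Proof. by rewrite big_ord_recr. Qed.

Lemma sum_first (F : nat -> C) N : \sum_(i < N.+1) F i = F 0%N + \sum_(i < N) F i.+1.
Proof. by rewrite big_ord_recl. Qed.

Lemma eval_formE f (p : {poly C}) N :
  (size p <= N)%N -> eval_form f p = \sum_(i < N) p`_i * f i.
Proof.
move=> H; rewrite /eval_form (big_ord_widen N (fun i => p`_i * f i) H) big_mkcond.
apply: eq_bigr => i _; case: ifP => // /negbT; rewrite -leqNgt => Hi.
by rewrite nth_default // mul0r.
Qed.

Lemma eval_form_ext f g p : f =1 g -> eval_form f p = eval_form g p.
Proof. by move=> H; rewrite /eval_form; apply: eq_bigr => i _; rewrite H. Qed.

Lemma eval_form0 p : eval_form (fun _ => 0) p = 0.
Proof. by rewrite /eval_form big1 // => i _; rewrite mulr0. Qed.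

Lemma eval_form_Lop f q l : eval_form f (q * ('X - l%:P)) = eval_form (Lop l f) q.
Proof.
set N := size q.
have HN : (size (q * ('X - l%:P))%R <= N.+1)%N.
  apply: (leq_trans (size_polyMleq _ _)); rewrite size_XsubC addn2 /=; exact: leqnn.
rewrite (@eval_formE f _ _ HN) (@eval_formE (Lop l f) q N) //.
under eq_bigr do rewrite mulrBr coefB coefMX coefMC mulrBl.
rewrite sumrB (sum_first (fun i => (if i == 0%N then 0 else q`_i.-1) * f i)) eqxx mul0r add0r.
rewrite (sum_last (fun i => q`_i * l * f i)) [q`_N]nth_default // !mul0r addr0.
rewrite -sumrB; apply: eq_bigr => i _; rewrite /Lop /=; cC; ring.
Qed.

Lemma eval_form_Lops f q s :
  eval_form f (q * \prod_(z <- s) ('X - z%:P)) = eval_form (Lops s f) q.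
Proof.
elim: s f => [|l s IH] f /=; first by rewrite big_nil mulr1.
rewrite big_cons.
have -> : q * (('X - l%:P) * \prod_(z <- s) ('X - z%:P)) =
          (q * \prod_(z <- s) ('X - z%:P)) * ('X - l%:P) by rewrite mulrCA mulrC.
by rewrite eval_form_Lop IH.
Qed.

Lemma eval_formXn f m : eval_form f 'X^m = f m.
Proof.
rewrite (@eval_formE _ _ m.+1) ?size_polyXn // (sum_last (fun i => 'X^m`_i * f i)) coefXn eqxx mul1r big1 ?add0r //.
move=> i _; rewrite coefXn; have := ltn_ord i; rewrite ltn_neqAle => /andP[/negPf -> _].
by rewrite mul0r.
Qed.

Lemma eval_formZ f c p : eval_form f (c *: p) = c * eval_form f p.
Proof.
rewrite (@eval_formE _ _ (size p)) ?size_scale_leq // /eval_form mulr_sumr.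
by apply: eq_bigr => i _; rewrite coefZ mulrA.
Qed.

Definition killer (r : seq term) : seq C := flatten [seq nseq t.1.1.+1 t.1.2 | t <- r].

Lemma killer_cons t r : killer (t :: r) = nseq t.1.1.+1 t.1.2 ++ killer r.
Proof. by []. Qed.

Lemma killerP r t : t \in r -> (t.1.1 < count_mem t.1.2 (killer r))%N.
Proof.
elim: r => [|t' r IH] //; rewrite inE => /orP[/eqP ->|Ht].
  by rewrite killer_cons count_cat count_nseq /= eqxx mul1n ltn_addr.
by rewrite killer_cons count_cat (leq_trans (IH Ht)) // leq_addl.
Qed.

Lemma Span_circ f : Span f -> in_circ f.
Proof.
move=> [r Hr].
set P := \prod_(z <- killer r) ('X - z%:P).
exists (fun p => exists q, p = q * P); split; [split; [|split]|split].
- by exists 0; rewrite mul0r.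
- by move=> p q [q1 ->] [q2 ->]; exists (q1 + q2); rewrite mulrDl.
- by move=> p q [q1 ->]; exists (q * q1); rewrite mulrA.
- exists P; split; first by exists 1; rewrite mul1r.
  by apply: monic_neq0; apply: monic_prod_XsubC.
- move=> p [q ->]; rewrite (@eval_form_ext _ _ _ Hr) eval_form_Lops.
  rewrite (@eval_form_ext _ (fun _ => 0)) ?eval_form0 // => m.
  rewrite Lops_val big1_seq // => t /andP[_ Ht].
  by rewrite Lops_kill ?mulr0 // killerP.
Qed.

Lemma Lop_ker l f : Lop l f =1 (fun _ => 0) -> f =1 (fun m => f 0%N * phi l m).
Proof.
move=> H; elim => [|m IH]; first by rewrite /phi expr0 mulr1.
have := H m; rewrite /Lop => /subr0_eq ->; rewrite IH /phi exprS; cC; ring.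
Qed.

Definition Sol l g := exists h, Span h /\ Lop l h =1 g.

Lemma Sol_ext l g g' : g =1 g' -> Sol l g -> Sol l g'.
Proof. by move=> H [h [Sh Hh]]; exists h; split => // m; rewrite Hh H. Qed.

Lemma Sol_lin l c1 c2 g1 g2 : Sol l g1 -> Sol l g2 -> Sol l (fun m => c1 * g1 m + c2 * g2 m).
Proof.
move=> [h1 [S1 H1]] [h2 [S2 H2]]; exists (fun m => c1 * h1 m + c2 * h2 m); split.
  by apply: Span_add; apply: Span_scale.
by move=> m; rewrite -H1 -H2 /Lop; cC; ring.
Qed.

Lemma Sol_b l n mu : Sol l (b n mu).
Proof.
case: (eqVneq mu l) => [->|neq].
  exists (fun m => (n.+1%:R)^-1 * b n.+1 l m); split; first by apply: Span_scale; apply: Span_b.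
  move=> m; rewrite /Lop.
  have := Lop_b l n.+1 l m; rewrite /Lop subrr mul0r add0r /= => H.
  transitivity (n.+1%:R^-1 * (xsh (b n l) m.+1 - l * xsh (b n l) m)); first by cC; ring.
  by rewrite H mulrA mulVf ?mul1r // pnatr_eq0.
have nz : mu - l != 0 by rewrite subr_eq0.
elim: n => [|n [h [Sh Hh]]].
  exists (fun m => (mu - l)^-1 * b 0 mu m); split; first by apply: Span_scale; apply: Span_b.
  move=> m; have := Lop_b l 0 mu m; rewrite /Lop mul0r addr0 => H.
  transitivity ((mu - l)^-1 * (b 0 mu m.+1 - l * b 0 mu m)); first by cC; ring.
  by rewrite H mulrA mulVf ?mul1r.
exists (fun m => (mu - l)^-1 * (1 * b n.+1 mu m + (- n.+1%:R) * h m)); split.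
  by apply: Span_scale; apply: Span_add; apply: Span_scale => //; apply: Span_b.
move=> m; have := Hh m; rewrite /Lop => Hm.
have Hb := b_shift n.+1 mu m; change (n.+1.-1) with n in Hb.
have -> : h m.+1 = l * h m + b n mu m by rewrite -Hm; cC; ring.
rewrite Hb.
transitivity ((mu - l)^-1 * (mu - l) * b n.+1 mu m); first by cC; ring.
by rewrite mulVf ?mul1r.
Qed.

Lemma Sol_Span l g : Span g -> Sol l g.
Proof.
move=> [r Hr]; apply: (@Sol_ext _ (val r)) => [m|]; first by rewrite Hr.
elim: r {Hr} => [|t r IH].
  exists (fun _ => 0); split; first exact: Span_0.
  by move=> m; rewrite /Lop /val big_nil mulr0 subr0.
apply: (@Sol_ext _ (fun m => t.2 * b t.1.1 t.1.2 m + 1 * val r m)).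
  by move=> m; rewrite /val big_cons mul1r.
by apply: Sol_lin => //; apply: Sol_b.
Qed.

Lemma Lops_Span s f : Lops s f =1 (fun _ => 0) -> Span f.
Proof.
elim: s f => [|l s IH] f /= H.
  by apply: (@Span_ext (fun _ => 0)); [move=> m; rewrite H | exact: Span_0].
have [h [Sh Hh]] := @Sol_Span l _ (IH _ H).
have Hd : Lop l (fun m => f m - h m) =1 (fun _ => 0).
  move=> m; transitivity (Lop l f m - Lop l h m); first by rewrite /Lop; cC; ring.
  by rewrite Hh subrr.
have Hk := @Lop_ker _ _ Hd.
apply: (@Span_ext (fun m => 1 * h m + (f 0%N - h 0%N) * b 0 l m)).
  by move=> m; have := Hk m => /= Hm; rewrite mul1r -Hm; cC; ring.
by apply: Span_add; apply: Span_scale => //; apply: Span_b.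
Qed.

Lemma circ_Span f : in_circ f -> Span f.
Proof.
move=> [I [[I0 [Iadd Imul]] [[p [Ip p0]] Hv]]].
have [s Hs] := closed_field_poly_normal p.
set c := lead_coef p.
have c0 : c != 0 by rewrite lead_coef_eq0.
apply: (@Lops_Span s) => m.
have := Hv _ (Imul _ 'X^m Ip).
rewrite Hs -/c -scalerAr eval_formZ eval_form_Lops eval_formXn => /eqP.
by rewrite mulf_eq0 (negPf c0) /= => /eqP.
Qed.

Lemma SP0 (X : eqType) (T : seq X) y (G : X -> C) :
  y \notin T -> \sum_(x <- T) (y == x)%:R * G x = 0.
Proof.
move=> Hy; rewrite big1_seq // => x /andP[_ Hx].
have -> : (y == x) = false by apply/negP => /eqP Hyx; rewrite Hyx Hx in Hy.
by rewrite mul0r.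
Qed.

Lemma SP1 (X : eqType) (T : seq X) y (G : X -> C) :
  uniq T -> y \in T -> \sum_(x <- T) (y == x)%:R * G x = G y.
Proof.
elim: T => [|x T IH] //= /andP[xT uT]; rewrite inE big_cons => /orP[/eqP ->|yT].
  by rewrite eqxx mul1r SP0 // addr0.
have -> : (y == x) = false by apply/negP => /eqP Hyx; move: xT; rewrite -Hyx yT.
by rewrite mul0r add0r IH.
Qed.

Definition val2 (N : nat) (S : seq C) (a : nat -> C -> C) : dual :=
  fun m => \sum_(mu <- S) \sum_(0 <= n < N) a n mu * b n mu m.
Definition supp2 N (S : seq C) (a : nat -> C -> C) :=
  forall n mu, (N <= n)%N \/ mu \notin S -> a n mu = 0.
Definition LA l (a : nat -> C -> C) : nat -> C -> C :=
  fun n mu => (mu - l) * a n mu + n.+1%:R * a n.+1 mu.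

Lemma supp2_LA N S a l : supp2 N S a -> supp2 N S (LA l a).
Proof.
move=> H n mu [Hn|Hmu]; rewrite /LA.
  by rewrite (H n mu) ?(H n.+1 mu) ?mulr0 ?addr0 //; left => //; apply: leqW.
by rewrite (H n mu) ?(H n.+1 mu) ?mulr0 ?addr0 //; right.
Qed.

Lemma supp2_iter N S a l k : supp2 N S a -> supp2 N S (iter k (LA l) a).
Proof. by move=> H; elim: k => [|k IH] //=; apply: supp2_LA. Qed.

Lemma sum_shift (G : nat -> C) N : G 0%N = 0 -> G N = 0 ->
  \sum_(0 <= n < N) G n = \sum_(0 <= n < N) G n.+1.
Proof.
case: N => [|N] G0 GN; first by rewrite !big_geq.
by rewrite big_nat_recl // big_nat_recr //= G0 GN add0r addr0.
Qed.

Lemma val2_L N S a l m : supp2 N S a -> Lop l (val2 N S a) m = val2 N S (LA l a) m.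
Proof.
move=> Hs; rewrite /Lop /val2 mulr_sumr -sumrB; apply: eq_bigr => mu _.
rewrite mulr_sumr -sumrB.
transitivity (\sum_(0 <= n < N) ((mu - l) * a n mu * b n mu m + n%:R * a n mu * b n.-1 mu m)).
  by apply: eq_bigr => n _; rewrite b_shift; cC; ring.
transitivity (\sum_(0 <= n < N) ((mu - l) * a n mu * b n mu m + n.+1%:R * a n.+1 mu * b n mu m)).
  rewrite !big_split /=; cC; congr (_ + _).
  apply: (@sum_shift (fun n => n%:R * a n mu * b n.-1 mu m)); first by rewrite !mul0r.
  by rewrite (Hs N mu) ?mulr0 ?mul0r //; left.
by apply: eq_bigr => n _; rewrite /LA; cC; ring.
Qed.

Lemma iterL0 l k f : f =1 (fun _ => 0) -> iter k (Lop l) f =1 (fun _ => 0).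
Proof.
move=> H; elim: k => [|k IH] m //=; rewrite (@Lop_ext _ _ _ IH) /Lop mulr0 subr0 //.
Qed.

Lemma val2_iterL N S a l k : supp2 N S a ->
  iter k (Lop l) (val2 N S a) =1 val2 N S (iter k (LA l) a).
Proof.
move=> Hs; elim: k => [|k IH] m //=.
by rewrite (@Lop_ext _ _ _ IH) val2_L //; apply: supp2_iter.
Qed.

Lemma iterLA_at l a k n :
  (n`!)%:R * iter k (LA l) a n l = ((n + k)`!)%:R * a (n + k)%N l.
Proof.
elim: k n => [|k IH] n; first by rewrite addn0.
rewrite iterS {1}/LA subrr mul0r add0r mulrA -natrM mulnC -factS IH addSnnS //.
Qed.

Lemma fact_neq0 n : (n`!)%:R != 0 :> C.
Proof. by rewrite pnatr_eq0 -lt0n fact_gt0. Qed.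

Lemma back N l mu c : mu != l -> (forall n, (N <= n)%N -> c n mu = 0) ->
  (forall n, LA l c n mu = 0) -> forall n, c n mu = 0.
Proof.
move=> neq HN HL.
suff H : forall d n, (N <= n + d)%N -> c n mu = 0.
  by move=> n; apply: (H N); rewrite leq_addl.
elim=> [|d IH] n Hnd; first by rewrite addn0 in Hnd; exact: HN.
case: (leqP N (n + d)) => [Hl|Hg]; first exact: IH.
have Hn1 : c n.+1 mu = 0 by apply: IH; rewrite addSn -addnS.
have := HL n; rewrite /LA Hn1 mulr0 addr0 => /eqP.
by rewrite mulf_eq0 subr_eq0 (negPf neq) /= => /eqP.
Qed.

Lemma count_sum (S : seq C) l (F : C -> C) : (forall mu, mu != l -> F mu = 0) ->
  \sum_(mu <- S) F mu = (count_mem l S)%:R * F l.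
Proof.
move=> H; elim: S => [|x S IH]; first by rewrite big_nil mul0r.
rewrite big_cons IH /=; case: (eqVneq x l) => [->|ne].
  by rewrite add1n -natr1 mulrDl mul1r addrC.
by rewrite H // add0r add0n.
Qed.

Lemma val2_0 N S a : supp2 N S a -> val2 N S a 0 = \sum_(mu <- S) a 0%N mu.
Proof.
move=> Hs; rewrite /val2; apply: eq_bigr => mu _.
case: N Hs => [|N] Hs; first by rewrite big_geq // (Hs 0%N mu) //; left.
rewrite big_nat_recl // big1 ?addr0 ?b0 ?mulr1 // => n _.
by rewrite b0 mulr0.
Qed.

Lemma U1 N l a : supp2 N [:: l] a -> (forall m, val2 N [:: l] a m = 0) -> forall k, a k l = 0.
Proof.
move=> Hs Hv k.
have := @val2_iterL N _ a l k Hs 0%N.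
rewrite iterL0 // val2_0; last by apply: supp2_iter.
rewrite big_seq1 => /esym H.
have := iterLA_at l a k 0; rewrite H mulr0 add0n => /esym/eqP.
by rewrite mulf_eq0 (negPf (fact_neq0 k)) /= => /eqP.
Qed.

Lemma U2 S N a : supp2 N S a -> (forall m, val2 N S a m = 0) -> forall n mu, a n mu = 0.
Proof.
elim: S N a => [|l S IH] N a Hs Hv n mu; first by apply: Hs; right.
set a' := iter N (LA l) a.
have Hs' : supp2 N (l :: S) a' by apply: supp2_iter.
have a'l : forall n, a' n l = 0.
  move=> k; have := iterLA_at l a N k; rewrite (Hs (k + N)%N l); last by left; rewrite leq_addl.
  by rewrite mulr0 => /eqP; rewrite mulf_eq0 (negPf (fact_neq0 k)) /= => /eqP.
have HsS : supp2 N S a'.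
  move=> k nu [Hk|Hnu]; first by apply: Hs'; left.
  case: (eqVneq nu l) => [->|ne]; first exact: a'l.
  by apply: Hs'; right; rewrite inE negb_or ne Hnu.
have HvS : forall m, val2 N S a' m = 0.
  move=> m; have := @val2_iterL N _ a l N Hs m; rewrite iterL0 // /val2 big_cons.
  rewrite -/a' big1 ?add0r; last by move=> k _; rewrite a'l mul0r.
  by move/esym.
have IH' := IH N a' HsS HvS.
have Hother : forall nu, nu != l -> forall k, a k nu = 0.
  move=> nu ne.
  suff H : forall k, (forall n, iter k (LA l) a n nu = 0) -> forall n, a n nu = 0.
    by apply: (H N) => k; apply: IH'.
  elim=> [|k IHk] Hk //; apply: IHk; apply: (@back N l nu) => //.
  by move=> j Hj; apply: (@supp2_iter N (l :: S) a l k Hs j nu); left.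
case: (eqVneq mu l) => [->|ne]; last exact: Hother.
pose a1 := fun k nu => if nu == l then a k l else 0.
have Hs1 : supp2 N [:: l] a1.
  move=> k nu [Hk|Hnu]; rewrite /a1; case: ifP => // /eqP Enu.
    by apply: Hs; left.
  by rewrite Enu inE eqxx in Hnu.
have Hv1 : forall m, val2 N [:: l] a1 m = 0.
  move=> m; have := Hv m; rewrite /val2 (@count_sum _ l) ?big_seq1; last first.
    by move=> nu ne'; rewrite big1 // => k _; rewrite Hother // mul0r.
  move/eqP; rewrite mulf_eq0 pnatr_eq0 /= eqxx add1n /= => /eqP H0.
  by rewrite -[RHS]H0; apply: eq_bigr => k _; rewrite /a1 eqxx.
have := @U1 N l a1 Hs1 Hv1 n; by rewrite /a1 eqxx.
Qed.

Definition coef (r : seq term) n mu :=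
  \sum_(t <- r) (t.1.1 == n)%:R * (t.1.2 == mu)%:R * t.2.
Definition Nr (r : seq term) := foldr (fun t acc => (t.1.1.+1 + acc)%N) 0%N r.
Definition Sr (r : seq term) := undup [seq t.1.2 | t <- r].

Lemma Nr_lt r t : t \in r -> (t.1.1 < Nr r)%N.
Proof.
elim: r => [|t' r IH] //; rewrite inE => /orP[/eqP ->|Ht] /=; first exact: leq_addr.
exact: ltn_addl (IH Ht).
Qed.

Lemma Sr_mem r t : t \in r -> t.1.2 \in Sr r.
Proof. by move=> Ht; rewrite mem_undup; apply: map_f. Qed.

Lemma supp2_coef r : supp2 (Nr r) (Sr r) (coef r).
Proof.
move=> n mu H; rewrite /coef big1_seq // => t /andP[_ Ht].
case: H => [Hn|Hmu].
  have -> : (t.1.1 == n) = false.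
    by apply/negP => /eqP E; have := @Nr_lt _ _ Ht; rewrite E ltnNge Hn.
  by rewrite !mul0r.
have -> : (t.1.2 == mu) = false.
  by apply/negP => /eqP E; have := @Sr_mem _ _ Ht; rewrite E (negPf Hmu).
by rewrite mulr0 mul0r.
Qed.

Lemma val_val2 r m : val r m = val2 (Nr r) (Sr r) (coef r) m.
Proof.
symmetry; rewrite /val2 /coef.
transitivity (\sum_(mu <- Sr r) \sum_(0 <= n < Nr r) \sum_(t <- r)
   (t.1.2 == mu)%:R * ((t.1.1 == n)%:R * (t.2 * b n mu m))).
  apply: eq_bigr => mu _; apply: eq_bigr => n _; rewrite mulr_suml.
  by apply: eq_bigr => t _; cC; ring.
under eq_bigr do rewrite exchange_big.
rewrite exchange_big /val big_seq [RHS]big_seq; apply: eq_bigr => t Ht.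
under eq_bigr do rewrite -mulr_sumr.
rewrite (@SP1 _ _ t.1.2 (fun mu => \sum_(0 <= i < Nr r) (t.1.1 == i)%:R * (t.2 * b i mu m))).
- by rewrite SP1 ?iota_uniq // mem_index_iota leq0n Nr_lt.
- exact: undup_uniq.
- exact: Sr_mem.
Qed.

Lemma val_uniq r : (forall m, val r m = 0) -> forall n mu, coef r n mu = 0.
Proof.
move=> H; apply: (@U2 (Sr r) (Nr r)); first exact: supp2_coef.
by move=> m; rewrite -val_val2.
Qed.

Definition Wt n (w : C -> C) (r : seq term) := \sum_(t <- r) (t.1.1 == n)%:R * t.2 * w t.1.2.

Lemma UW r : (forall m, val r m = 0) -> forall n w, Wt n w r = 0.
Proof.
move=> H n w.
transitivity (\sum_(mu <- Sr r) coef r n mu * w mu); last first.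
  by rewrite big1 // => mu _; rewrite val_uniq // mul0r.
rewrite /Wt /coef.
under [RHS]eq_bigr do rewrite mulr_suml.
rewrite exchange_big big_seq [RHS]big_seq; apply: eq_bigr => t Ht.
rewrite -(@SP1 _ (Sr r) t.1.2 (fun mu => (t.1.1 == n)%:R * t.2 * w mu)) ?undup_uniq ?Sr_mem //.
by apply: eq_bigr => mu _; cC; ring.
Qed.


Lemma GA_sum (a : GA) (T : seq C) (G : C -> C) : uniq T ->
  (forall l, a l != 0 -> l \in T) ->
  \sum_(l <- finsupp a) a l * G l = \sum_(l <- T) a l * G l.
Proof.
move=> uT HT.
transitivity (\sum_(l <- T | l \in finsupp a) a l * G l); last first.
  rewrite big_mkcond; apply: eq_bigr => l _; case: ifP => // /negbT H.
  by rewrite fsfun_dflt // mul0r.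
rewrite -[RHS]big_filter; apply: perm_big; apply: uniq_perm.
- exact: fset_uniq.
- exact: filter_uniq.
move=> l; rewrite mem_filter; apply/idP/idP => [H|/andP[]//].
by rewrite H /= HT // -(mem_finsupp a l).
Qed.

Definition mkGA (s : seq C) (F : C -> C) : GA :=
  [fsfun l in [fset x | x in s]%fset => F l | 0].

Lemma mkGAE s F : (forall l, l \notin s -> F l = 0) -> forall l, mkGA s F l = F l.
Proof.
move=> H l; rewrite /mkGA fsfun_fun; case: ifP => // Hl.
rewrite H //; apply/negP => Hs; move/negbT: Hl; rewrite !inE /=.
by rewrite Hs.
Qed.

Lemma GA_point (v : GA) y : v y = \sum_(b <- finsupp v) (y == b)%:R * v b.
Proof.
case: (boolP (y \in finsupp v)) => Hy.
  by rewrite SP1 // fset_uniq.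
by rewrite SP0 // fsfun_dflt.
Qed.

Lemma Wt_pred1 n r (T : seq C) (G : C -> C) : uniq T -> (forall t, t \in r -> t.1.2 \in T) ->
  \sum_(l <- T) Wt n (fun mu => (mu == l)%:R) r * G l = Wt n G r.
Proof.
move=> uT HT; rewrite /Wt.
under eq_bigr do rewrite mulr_suml.
rewrite exchange_big [RHS]big_seq big_seq; apply: eq_bigr => t Ht.
rewrite -(@SP1 _ T t.1.2 (fun l => (t.1.1 == n)%:R * t.2 * G l)) ?HT //.
by apply: eq_bigr => l _; cC; ring.
Qed.

Definition xr n r : GA := mkGA [seq t.1.2 | t <- r] (fun l => Wt n (fun mu => (mu == l)%:R) r).

Lemma Wt_notin n r l : l \notin [seq t.1.2 | t <- r] -> Wt n (fun mu => (mu == l)%:R) r = 0.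
Proof.
move=> Hl; rewrite /Wt big1_seq // => t /andP[_ Ht].
have -> : (t.1.2 == l) = false.
  by apply/negP => /eqP E; move: Hl; rewrite -E (map_f (fun t : term => t.1.2) Ht).
by rewrite mulr0.
Qed.

Lemma xrE n r l : xr n r l = Wt n (fun mu => (mu == l)%:R) r.
Proof. by rewrite /xr mkGAE // => l' Hl; apply: Wt_notin. Qed.

Lemma xr_sum n r G : \sum_(l <- finsupp (xr n r)) xr n r l * G l = Wt n G r.
Proof.
rewrite (@GA_sum _ (undup [seq t.1.2 | t <- r])) ?undup_uniq //; last first.
  move=> l; rewrite xrE mem_undup; apply: contraR => Hl; apply/eqP; exact: Wt_notin.
under eq_bigr do rewrite xrE.
by apply: Wt_pred1; [exact: undup_uniq | move=> t Ht; rewrite mem_undup (map_f (fun t : term => t.1.2) Ht)].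
Qed.

Lemma xi_b1 m : xi m = b 1 0 m.
Proof.
rewrite /xi /= /xsh /phi; case: m => [|[|m]] /=; first by rewrite mul0r.
  by rewrite expr0 mulr1.
by rewrite expr0n /= mulr0.
Qed.

Definition LMl c (x : GA) : seq term := (1%N, 0, c) :: [seq (0%N, l, x l) | l <- finsupp x].

Lemma Lmap_val c x m : Lmap c x m = val (LMl c x) m.
Proof. by rewrite /Lmap /LMl /val big_cons big_map xi_b1 /Psi1. Qed.

Lemma inJ_ext f g : f =1 g -> inJ f -> inJ g.
Proof.
move=> H [Hc H0]; split; last by rewrite -H.
apply: Span_circ; exact: (@Span_ext f g H (@circ_Span f Hc)).
Qed.

Lemma inJ_Span f : Span f -> f 0%N = 0 -> inJ f.
Proof. by move=> S H; split => //; apply: Span_circ. Qed.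

Lemma inJ_scale c f : inJ f -> inJ (fun m => c * f m).
Proof.
move=> [Hc H0]; apply: inJ_Span; last by rewrite H0 mulr0.
by apply: Span_scale; apply: circ_Span.
Qed.

Lemma inJ_b n mu : (0 < n)%N -> inJ (b n mu).
Proof.
move=> Hn; apply: inJ_Span; first exact: Span_b.
by rewrite b0; case: n Hn.
Qed.

Lemma inJ_xi : inJ xi.
Proof. by apply: (@inJ_ext (b 1 0)) => [m|]; [rewrite xi_b1 | apply: inJ_b]. Qed.

Lemma inJ_phid mu : inJ (fun m => phi mu m - phi 0 m).
Proof.
apply: inJ_Span; last by rewrite /phi !expr0 subrr.
apply: (@Span_ext (fun m => 1 * b 0 mu m + (-1) * b 0 0 m)).
  by move=> m /=; rewrite mul1r mulN1r.
by apply: Span_add; apply: Span_scale; apply: Span_b.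
Qed.

Lemma inJ2_ext f g : f =1 g -> inJ2 f -> inJ2 g.
Proof. by move=> H [s [Hs Hf]]; exists s; split => // n; rewrite -H. Qed.

Lemma inJ2_0 : inJ2 (fun _ => 0).
Proof. by exists [::]; split => // n; rewrite big_nil. Qed.

Lemma inJ2_add f g : inJ2 f -> inJ2 g -> inJ2 (fun m => f m + g m).
Proof.
move=> [s1 [H1 E1]] [s2 [H2 E2]]; exists (s1 ++ s2); split.
  by apply/List.Forall_app; split.
by move=> n; rewrite big_cat E1 E2.
Qed.

Lemma conv_scale c u v m : conv (fun k => c * u k) v m = c * conv u v m.
Proof. by rewrite /conv mulr_sumr; apply: eq_bigr => k _; cC; ring. Qed.

Lemma inJ2_scale c f : inJ2 f -> inJ2 (fun m => c * f m).
Proof.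
move=> [s [Hs E]]; exists [seq ((fun k => c * uv.1 k), uv.2) | uv <- s]; split.
  apply/List.Forall_map; apply: List.Forall_impl Hs => uv [H1 H2]; split => //.
  exact: inJ_scale.
by move=> n; rewrite big_map E mulr_sumr; apply: eq_bigr => uv _; rewrite conv_scale.
Qed.

Lemma inJ2_conv u v : inJ u -> inJ v -> inJ2 (conv u v).
Proof. by move=> Hu Hv; exists [:: (u, v)]; split; [constructor | move=> n; rewrite big_seq1]. Qed.

Lemma inJ2_sum (I : Type) (r : seq I) (F : I -> dual) :
  (forall i, List.In i r -> inJ2 (F i)) -> inJ2 (fun m => \sum_(i <- r) F i m).
Proof.
elim: r => [|i r IH] H.
  by apply: (@inJ2_ext (fun _ => 0) _ _ inJ2_0) => m; rewrite big_nil.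
apply: (@inJ2_ext (fun m => F i m + \sum_(j <- r) F j m)).
  by move=> m; rewrite big_cons.
apply: inJ2_add; first by apply: H; left.
by apply: IH => j Hj; apply: H; right.
Qed.


Lemma part1 c x : in_ker_eps_a x -> inJ (Lmap c x).
Proof.
move=> Hx; apply: inJ_Span.
  by exists (LMl c x) => m; rewrite Lmap_val.
rewrite /Lmap /xi /Psi1 /phi mulr0 add0r.
rewrite -[RHS]Hx /eps_a; apply: eq_bigr => l _; by rewrite expr0 mulr1.
Qed.

Definition D (t : term) : dual := fun m =>
  b t.1.1 t.1.2 m - (t.1.1 == 1%N)%:R * b 1 0 m - (t.1.1 == 0%N)%:R * phi t.1.2 m.

Lemma inJ2_D t : inJ2 (D t).
Proof.
case: t => [[n mu] c]; case: n => [|[|n]].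
- apply: (@inJ2_ext (fun _ => 0) _ _ inJ2_0) => m.
  by rewrite /D /= mul0r mul1r subr0 subrr.
- apply: (@inJ2_ext (conv xi (fun m => phi mu m - phi 0 m))); last first.
    by apply: inJ2_conv; [exact: inJ_xi | exact: inJ_phid].
  move=> m; rewrite conv_xi /D /= /xsh mul1r mul0r subr0; cC; ring.
- apply: (@inJ2_ext (conv xi (b n.+1 mu))); last first.
    by apply: inJ2_conv; [exact: inJ_xi | exact: inJ_b].
  by move=> m; rewrite conv_xi /D /= !mul0r !subr0.
Qed.

Lemma part2 f : inJ f ->
  exists (c : C) (x : GA), in_ker_eps_a x /\ inJ2 (fun n => f n - Lmap c x n).
Proof.
move=> [Hc H0]; have [r Hr] := @circ_Span f Hc.
exists (Wt 1 (fun _ => 1) r), (xr 0 r); split.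
  rewrite /in_ker_eps_a /eps_a.
  transitivity (\sum_(l <- finsupp (xr 0 r)) xr 0 r l * 1).
    by apply: eq_bigr => l _; rewrite mulr1.
  rewrite xr_sum; transitivity (val r 0); last by rewrite -Hr.
  by rewrite /val /Wt; apply: eq_bigr => t _; rewrite b0; cC; ring.
apply: (@inJ2_ext (fun m => \sum_(t <- r) t.2 * D t m)).
  move=> m; rewrite /Lmap xi_b1 /Psi1 (xr_sum 0 r (fun l => phi l m)) Hr /val /Wt.
  rewrite mulr_suml -big_split -sumrB /=; apply: eq_bigr => t _; rewrite /D /=; cC; ring.
apply: inJ2_sum => t _; apply: inJ2_scale; exact: inJ2_D.
Qed.

Lemma PLsum (I : Type) (R : seq I) (k : I -> C) (F : I -> C) (T : seq C) (G : C -> C) :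
  uniq T -> all (fun i => k i \in T) R ->
  \sum_(l <- T) (\sum_(i <- R) (k i == l)%:R * F i) * G l = \sum_(i <- R) F i * G (k i).
Proof.
move=> uT; elim: R => [|i R IH].
  by move=> _; rewrite big_nil big1 // => l _; rewrite big_nil mul0r.
move=> /andP[Hi HR].
under eq_bigr do rewrite big_cons mulrDl.
rewrite big_split /= IH // big_cons; cC; congr (_ + _).
transitivity (\sum_(l <- T) (k i == l)%:R * (F i * G l)).
  by apply: eq_bigr => l _; cC; ring.
by rewrite SP1.
Qed.

Lemma eq_shift (x y l : C) : (y == l - x) = (x + y == l).
Proof. by rewrite eq_sym subr_eq eq_sym addrC. Qed.

Lemma Psi1_mul (s : seq (GA * GA)) (x : GA) :
  (forall l, x l = \sum_(uv <- s) gmul uv.1 uv.2 l) ->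
  forall m, Psi1 x m = \sum_(uv <- s) conv (Psi1 uv.1) (Psi1 uv.2) m.
Proof.
move=> Hx m.
pose R := [seq (uv, ab) | uv <- s, ab <- [seq (a, b) | a <- finsupp uv.1, b <- finsupp uv.2]].
pose k := fun i : (GA * GA) * (C * C) => i.2.1 + i.2.2.
pose F := fun i : (GA * GA) * (C * C) => i.1.1 i.2.1 * i.1.2 i.2.2.
have Hxl : forall l, x l = \sum_(i <- R) (k i == l)%:R * F i.
  move=> l; rewrite Hx big_allpairs_dep; apply: eq_bigr => uv _.
  rewrite /gmul big_allpairs; apply: eq_bigr => a _.
  rewrite (GA_point uv.2 (l - a)) mulr_sumr; apply: eq_bigr => b' _.
  rewrite /k /F /= eq_sym eq_shift; cC; ring.
set T := undup (finsupp x ++ map k R).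
rewrite /Psi1 (@GA_sum x T) ?undup_uniq //; last first.
  by move=> l Hl; rewrite mem_undup mem_cat -(mem_finsupp x l) in Hl *; rewrite Hl.
under eq_bigr do rewrite Hxl.
rewrite PLsum ?undup_uniq //; last first.
  by apply/allP => i Hi; rewrite mem_undup mem_cat (map_f k Hi) orbT.
rewrite big_allpairs_dep; apply: eq_bigr => uv _; rewrite big_allpairs.
rewrite (@conv_suml _ (finsupp uv.1) uv.1 phi); apply: eq_bigr => a _.
rewrite (@conv_sumr _ (finsupp uv.2) uv.2 phi) mulr_sumr; apply: eq_bigr => b' _.
by rewrite conv_phi /k /F /=; cC; ring.
Qed.

Lemma part3b c x : in_ker_eps_a x -> c = 0 -> in_ker_eps_a2 x -> inJ2 (Lmap c x).
Proof.
move=> Hx -> [s [Hs Hsx]].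
apply: (@inJ2_ext (fun m => \sum_(uv <- s) conv (Psi1 uv.1) (Psi1 uv.2) m)).
  by move=> m; rewrite /Lmap mul0r add0r (@Psi1_mul s x Hsx m).
apply: inJ2_sum => uv Huv.
have [H1 H2] := proj1 (List.Forall_forall _ _) Hs uv Huv.
apply: inJ2_conv; apply: (@inJ_ext (Lmap 0 _)); try (move=> m; rewrite /Lmap mul0r add0r //);
  exact: part1.
Qed.


Lemma getP (s : seq (dual * dual)) :
  List.Forall (fun uv => inJ uv.1 /\ inJ uv.2) s ->
  exists P : seq (seq term * seq term),
    all (fun p => (val p.1 0%N == 0) && (val p.2 0%N == 0)) P /\
    forall m, \sum_(uv <- s) conv uv.1 uv.2 m = \sum_(p <- P) val (prodr p.1 p.2) m.
Proof.
elim: s => [|uv s IH] H.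
  by exists [::]; split => // m; rewrite !big_nil.
inversion H as [|uv' s' [[Hc1 H01] [Hc2 H02]] Hs']; subst.
have [r1 Hr1] := @circ_Span _ Hc1.
have [r2 Hr2] := @circ_Span _ Hc2.
have [P [HP HPs]] := IH Hs'.
exists ((r1, r2) :: P); split.
  by rewrite /= HP andbT -Hr1 -Hr2 H01 H02 eqxx.
move=> m; rewrite !big_cons HPs (@conv_ext _ _ _ _ Hr1 Hr2) val_conv //.
Qed.

Definition negr (r : seq term) : seq term := [seq (t.1, - t.2) | t <- r].

Lemma val_cat r1 r2 m : val (r1 ++ r2) m = val r1 m + val r2 m.
Proof. by rewrite /val big_cat. Qed.

Lemma val_neg r m : val (negr r) m = - val r m.
Proof. by rewrite /val /negr big_map -sumrN; apply: eq_bigr => t _ /=; rewrite mulNr. Qed.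

Lemma Wt_cat n w r1 r2 : Wt n w (r1 ++ r2) = Wt n w r1 + Wt n w r2.
Proof. by rewrite /Wt big_cat. Qed.

Lemma Wt_neg n w r : Wt n w (negr r) = - Wt n w r.
Proof. by rewrite /Wt /negr big_map -sumrN; apply: eq_bigr => t _ /=; cC; ring. Qed.

Definition flatP (P : seq (seq term * seq term)) := flatten [seq prodr p.1 p.2 | p <- P].

Lemma val_flat P m : val (flatP P) m = \sum_(p <- P) val (prodr p.1 p.2) m.
Proof. by rewrite /val /flatP big_flatten big_map. Qed.

Lemma Wt_flat n w P : Wt n w (flatP P) = \sum_(p <- P) Wt n w (prodr p.1 p.2).
Proof. by rewrite /Wt /flatP big_flatten big_map. Qed.

Lemma Wt_prodr n w r1 r2 : Wt n w (prodr r1 r2) =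
  \sum_(t1 <- r1) \sum_(t2 <- r2)
    ((t1.1.1 + t2.1.1)%N == n)%:R * (t1.2 * t2.2) * w (t1.1.2 + t2.1.2).
Proof. by rewrite /Wt /prodr big_allpairs_dep. Qed.

Lemma W0_val r : Wt 0 (fun _ => 1) r = val r 0%N.
Proof. by rewrite /Wt /val; apply: eq_bigr => t _; rewrite b0; cC; ring. Qed.

Lemma ind1 n1 n2 : ((n1 + n2 == 1)%N%:R : C) =
  (n1 == 0%N)%:R * (n2 == 1%N)%:R + (n1 == 1%N)%:R * (n2 == 0%N)%:R.
Proof.
case: n1 => [|[|n1]]; case: n2 => [|[|n2]];
  rewrite ?add0n ?addn0 ?addSn ?addnS /= ?mulr0 ?mul0r ?mulr1 ?mul1r ?addr0 ?add0r //.
Qed.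

Lemma ind0 n1 n2 : ((n1 + n2 == 0)%N%:R : C) = (n1 == 0%N)%:R * (n2 == 0%N)%:R.
Proof. by rewrite addn_eq0; case: (n1 == 0%N); case: (n2 == 0%N); rewrite ?mulr0 ?mulr1. Qed.

Lemma Wt1_prodr r1 r2 : Wt 1 (fun _ => 1) (prodr r1 r2) =
  Wt 0 (fun _ => 1) r1 * Wt 1 (fun _ => 1) r2 + Wt 1 (fun _ => 1) r1 * Wt 0 (fun _ => 1) r2.
Proof.
rewrite Wt_prodr /Wt !mulr_suml -big_split /=; apply: eq_bigr => t1 _.
rewrite !mulr_sumr -big_split /=; apply: eq_bigr => t2 _.
rewrite ind1; cC; ring.
Qed.

Lemma gmul_xr r1 r2 l : gmul (xr 0 r1) (xr 0 r2) l =
  Wt 0 (fun mu => (mu == l)%:R) (prodr r1 r2).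
Proof.
rewrite /gmul (xr_sum 0 r1 (fun a => xr 0 r2 (l - a))) Wt_prodr /Wt.
apply: eq_bigr => t1 _; rewrite xrE /Wt mulr_sumr; apply: eq_bigr => t2 _.
rewrite ind0 eq_shift; cC; ring.
Qed.

Lemma eps_xr r : val r 0%N = 0 -> in_ker_eps_a (xr 0 r).
Proof.
move=> H; rewrite /in_ker_eps_a /eps_a.
transitivity (\sum_(l <- finsupp (xr 0 r)) xr 0 r l * 1).
  by apply: eq_bigr => l _; rewrite mulr1.
by rewrite xr_sum W0_val.
Qed.

Lemma Forall_xr P : all (fun p => (val p.1 0%N == 0) && (val p.2 0%N == 0)) P ->
  List.Forall (fun uv => in_ker_eps_a uv.1 /\ in_ker_eps_a uv.2)
    [seq (xr 0 p.1, xr 0 p.2) | p <- P].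
Proof.
elim: P => [|p P IH] /=; first by constructor.
move=> /andP[/andP[/eqP H1 /eqP H2] HP]; constructor; last exact: IH.
by split; apply: eps_xr.
Qed.

Lemma part3f c x : in_ker_eps_a x -> inJ2 (Lmap c x) -> c = 0 /\ in_ker_eps_a2 x.
Proof.
move=> Hx [s [Hs Heq]].
have [P [HP HPs]] := @getP s Hs.
set R := flatP P.
have Hval : forall m, val (LMl c x ++ negr R) m = 0.
  move=> m; rewrite val_cat val_neg -Lmap_val Heq HPs val_flat subrr //.
have HW := @UW _ Hval.
have HWeq : forall n w, Wt n w (LMl c x) = Wt n w R.
  by move=> n w; apply/eqP; rewrite -subr_eq0 -Wt_neg -Wt_cat HW.
have HP' : forall p, p \in P -> val p.1 0%N = 0 /\ val p.2 0%N = 0.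
  by move=> p Hp; have /andP[/eqP ? /eqP ?] := allP HP p Hp.
split.
  have := HWeq 1%N (fun _ => 1).
  rewrite {1}/Wt /LMl big_cons big_map big1 => [|l _]; last by rewrite /= !mul0r.
  rewrite /= mulr1n mul1r mulr1 addr0 => ->.
  rewrite /R Wt_flat big_seq big1 // => p Hp.
  by rewrite Wt1_prodr !W0_val (proj1 (HP' p Hp)) (proj2 (HP' p Hp)) !mul0r mulr0 addr0.
exists [seq (xr 0 p.1, xr 0 p.2) | p <- P]; split; first exact: Forall_xr.
move=> l; rewrite big_map.
transitivity (Wt 0 (fun mu => (mu == l)%:R) (LMl c x)).
  rewrite /Wt /LMl big_cons big_map /= !mul0r add0r (GA_point x l).
  by apply: eq_bigr => l' _; rewrite eq_sym; cC; ring.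
rewrite HWeq /R Wt_flat; apply: eq_bigr => p _; by rewrite gmul_xr.
Qed.


Theorem lemma3p3 :
  (forall (c : C) (x : GA), in_ker_eps_a x -> inJ (Lmap c x)) /\
  (forall f : dual, inJ f ->
     exists (c : C) (x : GA), in_ker_eps_a x /\ inJ2 (fun n => f n - Lmap c x n)) /\
  (forall (c : C) (x : GA), in_ker_eps_a x ->
     (inJ2 (Lmap c x) <-> c = 0 /\ in_ker_eps_a2 x)).
Proof.
split; first by move=> c x Hx; exact: part1.
split; first by move=> f Hf; exact: part2.
move=> c x Hx; split; first exact: part3f.
by move=> [Hc H2]; exact: part3b.
Qed.
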